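(* Let $\mathcal G$ be the graph defined below. There is no mixed $1$-stack $1$-queue layout $(<,\{S,Q\})$ of $\mathcal G$ for which there exist edges $(v_1,v_2)\in Q$, $(u_1,u_2)\in S$ and a pair of twins $s,t$ with $v_1<u_1<s<t<u_2<v_2$.
   Context: Graph $\mathcal G$: take two vertices $A,B$ and $19$ copies of a gadget $H$, identified at $A$ and $B$. Each copy of $H$ consists of two further vertices $s,t$ (called twins) joined by the twin edge $(s,t)$, the edges $(A,s),(A,t),(B,s),(B,t)$, and seven further vertices (called connectors), each of degree $2$ and adjacent to exactly $s$ and $t$. ($A$ and $B$ are not adjacent.) For a vertex ordering $<$ and an edge $e$, let $L(e)<R(e)$ be its endpoints; edges $e,f$ cross if $L(e)<L(f)<R(e)<R(f)$ and nest if $L(e)<L(f)<R(f)<R(e)$. A stack is an edge set with no two crossing edges, a queue an edge set with no two nested edges. A mixed $1$-stack $1$-queue layout is a vertex ordering $<$ together with a partition of the edge set into a stack $S$ and a queue $Q$. *)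

(* Defs.v *)
From mathcomp Require Import all_boot.
Set Implicit Arguments. Unset Strict Implicit. Unset Printing Implicit Defensive.

(* Vertices of G: A (= inl (inl false)), B (= inl (inl true)),
   twins (copy i, side b) = inl (inr (i, b)), connectors (copy i, index j) = inr (i, j). *)
Definition V : finType := ((bool + ('I_19 * bool)) + ('I_19 * 'I_7))%type.

Definition vA : V := inl (inl false).
Definition vB : V := inl (inl true).
Definition twin (i : 'I_19) (b : bool) : V := inl (inr (i, b)).
Definition conn (i : 'I_19) (j : 'I_7) : V := inr (i, j).

(* adjacency of G: A,B ~ every twin; twins of the same copy adjacent (twin edge);
   each connector adjacent exactly to the two twins of its copy; A,B not adjacent. *)
Definition adj (x y : V) : bool :=
  match x, y with
  | inl (inl _), inl (inr _) => true
  | inl (inr _), inl (inl _) => true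
  | inl (inr (i, b)), inl (inr (i', b')) => (i == i') && (b != b')
  | inl (inr (i, _)), inr (i', _) => i == i'
  | inr (i, _), inl (inr (i', _)) => i == i'
  | _, _ => false
  end.

Definition edges : {set {set V}} :=
  [set e : {set V} | [exists x : V, exists y : V, adj x y && (e == [set x; y])]].

(* A vertex ordering is given by an injective position map p : V -> nat
   (x < y iff p x < p y).  An edge set is a stack if no two of its edges cross,
   a queue if no two of its edges nest. *)
Definition is_stack (p : V -> nat) (S : {set {set V}}) : Prop :=
  forall a b c d, [set a; b] \in S -> [set c; d] \in S ->
    ~ [/\ p a < p c, p c < p b & p b < p d].

Definition is_queue (p : V -> nat) (Q : {set {set V}}) : Prop :=
  forall a b c d, [set a; b] \in Q -> [set c; d] \in Q ->
    ~ [/\ p a < p c, p c < p d & p d < p b].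

Definition mixed_layout (p : V -> nat) (S Q : {set {set V}}) : Prop :=
  [/\ injective p, S :|: Q = edges, S :&: Q = set0, is_stack p S & is_queue p Q].

(* Main.v *)
Require Import Defs.
From mathcomp Require Import all_boot.
From mathcomp Require Import zify.

Lemma adj_edge {x y} : adj x y -> [set x; y] \in edges.
Proof.
move=> h; rewrite inE; apply/existsP; exists x; apply/existsP; exists y.
by rewrite h eqxx.
Qed.

Lemma conn_adj i j b : adj (conn i j) (twin i b).
Proof. by rewrite /adj /= eqxx. Qed.

Lemma in_SQ {S Q : {set {set V}}} {e} : S :|: Q = edges -> e \in edges ->
  e \in S \/ e \in Q.
Proof. by move=> <-; rewrite inE => /orP. Qed.

Theorem lemma2 :
  ~ exists (p : V -> nat) (S Q : {set {set V}}),
      mixed_layout p S Q /\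
      exists (v1 v2 u1 u2 : V) (i : 'I_19) (b : bool),
        [/\ [set v1; v2] \in Q, [set u1; u2] \in S &
            let s := twin i b in let t := twin i (~~ b) in
            [/\ p v1 < p u1, p u1 < p s, p s < p t, p t < p u2 & p u2 < p v2]].
Proof.
case=> p [S [Q [[pinj SQ _ HS HQ] [v1 [v2 [u1 [u2 [i [b [Hv Hu H3]]]]]]]]]].
cbv zeta in H3; case: H3 => h1 h2 h3 h4 h5.
set s := twin i b in h2 h3 h4.
set t := twin i (~~ b) in h3 h4.
have midS : forall c x, adj c x -> p v1 < p c -> p c < p v2 -> p v1 < p x ->
    p x < p v2 -> p c != p x -> [set c; x] \in S.
  move=> c x a g1 g2 g3 g4 hn; case: (in_SQ SQ (adj_edge a)) => // hq.
  case: (ltngtP (p c) (p x)) => g.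
  - by case: (HQ v1 v2 c x Hv hq); split; lia.
  - by case: (HQ v1 v2 x c Hv (_ : [set x; c] \in Q)); [rewrite setUC | split; lia].
  - by rewrite g eqxx in hn.
have outL : forall c x, adj c x -> p c < p u1 -> p u1 < p x -> p x < p u2 ->
    [set c; x] \in Q.
  move=> c x a g1 g2 g3; case: (in_SQ SQ (adj_edge a)) => // hs.
  by case: (HS c x u1 u2 hs Hu); split.
have outR : forall c x, adj c x -> p u2 < p c -> p u1 < p x -> p x < p u2 ->
    [set c; x] \in Q.
  move=> c x a g1 g2 g3; case: (in_SQ SQ (adj_edge a)) => // hs.
  by case: (HS u1 u2 x c Hu (_ : [set x; c] \in S)); [rewrite setUC | split].
have nes : forall j, p (conn i j) != p s.
  by move=> j; apply/eqP => /pinj; rewrite /conn /s /t.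
have net : forall j, p (conn i j) != p t.
  by move=> j; apply/eqP => /pinj; rewrite /conn /s /t.
have As j : adj (conn i j) s by apply: conn_adj.
have At j : adj (conn i j) t by apply: conn_adj.
pose c j := conn i j.
have k0 : forall j1 j2, p (c j1) < p (c j2) -> p (c j2) <= p v1 -> False.
  move=> j1 j2 g1 g2.
  have m1 : [set c j1; t] \in Q by apply: (outL) => //; lia.
  have m2 : [set c j2; s] \in Q by apply: (outL) => //; lia.
  by case: (HQ _ _ _ _ m1 m2); split; lia.
have k1 : forall j1 j2, p (c j1) < p (c j2) -> p v2 <= p (c j1) -> False.
  move=> j1 j2 g1 g2.
  have m1 : [set s; c j2] \in Q by rewrite setUC; apply: (outR) => //; lia.
  have m2 : [set t; c j1] \in Q by rewrite setUC; apply: (outR) => //; lia.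
  by case: (HQ _ _ _ _ m1 m2); split; lia.
have k2 : forall j1 j2, p (c j1) < p (c j2) -> p v1 < p (c j1) -> p (c j2) < p s -> False.
  move=> j1 j2 g1 g2 g3.
  move: (nes j1) (net j1) (nes j2) (net j2) => n1 n2 n3 n4.
  have m1 : [set c j1; s] \in S by apply: (midS) => //; lia.
  have m2 : [set c j2; t] \in S by apply: (midS) => //; lia.
  by case: (HS _ _ _ _ m1 m2); split; lia.
have k3 : forall j1 j2, p (c j1) < p (c j2) -> p s < p (c j1) -> p (c j2) < p t -> False.
  move=> j1 j2 g1 g2 g3.
  move: (nes j1) (net j1) (nes j2) (net j2) => n1 n2 n3 n4.
  have m1 : [set s; c j2] \in S by rewrite setUC; apply: (midS) => //; lia.
  have m2 : [set c j1; t] \in S by apply: (midS) => //; lia.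
  by case: (HS _ _ _ _ m1 m2); split; lia.
have k4 : forall j1 j2, p (c j1) < p (c j2) -> p t < p (c j1) -> p (c j2) < p v2 -> False.
  move=> j1 j2 g1 g2 g3.
  move: (nes j1) (net j1) (nes j2) (net j2) => n1 n2 n3 n4.
  have m1 : [set s; c j1] \in S by rewrite setUC; apply: (midS) => //; lia.
  have m2 : [set t; c j2] \in S by rewrite setUC; apply: (midS) => //; lia.
  by case: (HS _ _ _ _ m1 m2); split; lia.
pose key (j : 'I_7) : nat := if p (c j) <= p v1 then 0 else if p v2 <= p (c j) then 1
  else if p (c j) < p s then 2 else if p (c j) < p t then 3 else 4.
have same : forall j1 j2, p (c j1) < p (c j2) -> key j1 = key j2 -> False.
{ move=> j1 j2 g.
  have n1 : p (c j1) != p s := nes j1.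
  have n2 : p (c j1) != p t := net j1.
  have n3 : p (c j2) != p s := nes j2.
  have n4 : p (c j2) != p t := net j2.
  rewrite /key.
  repeat case: ifP => ?.
  all: try (move=> E; discriminate E).
  all: move=> _.
  all: first [ refine (k0 j1 j2 g _); lia | refine (k1 j1 j2 g _); lia | refine (k2 j1 j2 g _ _); lia
        | refine (k3 j1 j2 g _ _); lia | refine (k4 j1 j2 g _ _); lia ]. }
have kinj : forall j1 j2, key j1 = key j2 -> j1 = j2.
  move=> j1 j2 e; case: (ltngtP (p (c j1)) (p (c j2))) => g.
  - by case: (same j1 j2 g e).
  - by case: (same j2 j1 g (esym e)).
  - by move/pinj: g => [].
have klt : forall j, key j < 5 by move=> j; rewrite /key; repeat case: ifP.
pose f (j : 'I_7) : 'I_5 := inord (key j).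
have finj : injective f.
  move=> j1 j2 /(congr1 (@nat_of_ord 5)); rewrite /f !inordK ?klt //; exact: kinj.
by move: (leq_card f finj); rewrite !card_ord.
Qed.
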